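(* Let $G$ be a classical subgroup of $\mathrm{GL}(N+1,\mathbb{C})$ (for instance $G=\mathrm{SL}(N+1,\mathbb{C})$), let $V$ and $W$ be finite-dimensional rational complex representations of $G$ equipped with Hermitian norms $\|\cdot\|$, and let $v\in V\setminus\{0\}$, $w\in W\setminus\{0\}$. Define $p_{v,w}(\sigma)=\log\|\sigma(w)\|^2-\log\|\sigma(v)\|^2$ for $\sigma\in G$. Then $$\inf_{\sigma\in G}p_{v,w}(\sigma)=\log\tan^2 d\big(\overline{G[v,w]},\,\overline{G[v,0]}\big),$$ where $d$ is the distance function of the Fubini–Study metric on $\mathbb{P}(V\oplus W)$ and $d(A,B)$ denotes the distance between the sets $A$ and $B$.
   Context: The Hermitian norms on $V$ and $W$ induce a Hermitian inner product $(\cdot,\cdot)$ on $V\oplus W$ (orthogonal direct sum), and the Fubini–Study distance on $\mathbb{P}(V\oplus W)$ is given by $\cos d([u],[u'])=|(u,u')|/(\|u\|\,\|u'\|)$. Here $[v,w]$ denotes the point of $\mathbb{P}(V\oplus W)$ determined by $(v,w)$, $[v,0]$ the point determined by $(v,0)$, and $\overline{G[v,w]}$, $\overline{G[v,0]}$ are the closures of their $G$-orbits in $\mathbb{P}(V\oplus W)$. *)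

(* Defs.v *)
From HB Require Import structures.
From mathcomp Require Import all_boot all_order all_algebra.
From mathcomp Require Import all_classical all_reals all_analysis.
From mathcomp Require Export complex.
Set Implicit Arguments. Unset Strict Implicit. Unset Printing Implicit Defensive.
Import Order.TTheory GRing.Theory Num.Theory.
Local Open Scope ring_scope.
Local Open Scope classical_set_scope.

Section Defs.
Variable R : realType.
Local Notation C := R[i].

Definition cconj (z : C) : C := Num.conj z.
Definition cabs (z : C) : R := complex.Re `|z|.

Definition symp_form (m : nat) : 'M[C]_(m + m) :=
  block_mx 0 1%:M (- 1%:M) 0.

Inductive classical_group (n : nat) : set 'M[C]_n -> Prop :=
| classical_GL : classical_group [set A | A \in unitmx]
| classical_SL : classical_group [set A | \det A = 1]
| classical_O  : classical_group [set A | A^T *m A = 1%:M]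
| classical_SO : classical_group [set A | A^T *m A = 1%:M /\ \det A = 1]
| classical_Sp (m : nat) (e : m + m = n) :
    classical_group
      [set A | A^T *m castmx (e, e) (symp_form m) *m A = castmx (e, e) (symp_form m)].

(** A function G -> C is regular (a "rational" function on G) when it is the
    restriction to G of a polynomial in the matrix entries and 1/det. *)
Definition regular_fun (n : nat) (G : set 'M[C]_n) (f : 'M[C]_n -> C) : Prop :=
  exists (K k : nat) (c : 'I_K -> C) (e : 'I_K -> 'I_n -> 'I_n -> nat),
    forall A, G A ->
      f A = (\det A) ^- k * \sum_(l < K) c l * \prod_(i < n) \prod_(j < n) A i j ^+ e l i j.

(** A finite-dimensional rational representation of G on C^d
    (vectors as column vectors): a group homomorphism with regular entries. *)
Definition rational_rep (n d : nat) (G : set 'M[C]_n) (rho : 'M[C]_n -> 'M[C]_d) : Prop :=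
  [/\ rho 1%:M = 1%:M,
      (forall A B, G A -> G B -> rho (A *m B) = rho A *m rho B) &
      forall i j, regular_fun G (fun A => rho A i j)].

(** Hermitian inner product on C^d given by a Hermitian positive definite
    matrix H: (u, u')_H = u'^* H u.  Every Hermitian norm arises this way. *)
Definition herm_ip (d : nat) (H : 'M[C]_d) (u u' : 'cV[C]_d) : C :=
  ((map_mx cconj u')^T *m H *m u) 0 0.

Definition hermitian_pd (d : nat) (H : 'M[C]_d) : Prop :=
  (map_mx cconj H)^T = H /\ forall u : 'cV[C]_d, u != 0 -> 0 < herm_ip H u u.

Definition herm_norm (d : nat) (H : 'M[C]_d) (u : 'cV[C]_d) : R :=
  Num.sqrt (complex.Re (herm_ip H u u)).

(** The orthogonal direct sum V (+) W, with V = C^a, W = C^b. *)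
Definition sum_ip (a b : nat) (HV : 'M[C]_a) (HW : 'M[C]_b)
  (x y : 'cV[C]_a * 'cV[C]_b) : C :=
  herm_ip HV x.1 y.1 + herm_ip HW x.2 y.2.

Definition sum_norm (a b : nat) (HV : 'M[C]_a) (HW : 'M[C]_b)
  (x : 'cV[C]_a * 'cV[C]_b) : R :=
  Num.sqrt (complex.Re (sum_ip HV HW x x)).

Definition fs_dist (a b : nat) (HV : 'M[C]_a) (HW : 'M[C]_b)
  (x y : 'cV[C]_a * 'cV[C]_b) : R :=
  acos (cabs (sum_ip HV HW x y) / (sum_norm HV HW x * sum_norm HV HW y)).

(** Points of P(V (+) W) are represented by nonzero vectors; a subset of
    P(V (+) W) is represented by a set of nonzero vectors (all of whose
    representatives are irrelevant since fs_dist is scale invariant). *)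
Definition nonzero_vec (a b : nat) (x : 'cV[C]_a * 'cV[C]_b) : Prop :=
  x.1 != 0 \/ x.2 != 0.

(** Closure in P(V (+) W) (w.r.t. the Fubini--Study metric, which induces the
    usual topology of projective space). *)
Definition fs_closure (a b : nat) (HV : 'M[C]_a) (HW : 'M[C]_b)
  (A : set ('cV[C]_a * 'cV[C]_b)) : set ('cV[C]_a * 'cV[C]_b) :=
  [set x | nonzero_vec x /\
     forall eps : R, 0 < eps -> exists2 y, A y & fs_dist HV HW x y < eps].

Definition fs_set_dist (a b : nat) (HV : 'M[C]_a) (HW : 'M[C]_b)
  (A B : set ('cV[C]_a * 'cV[C]_b)) : R :=
  inf [set fs_dist HV HW x y | x in A & y in B].

Definition orbit_pt (n a b : nat) (G : set 'M[C]_n)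
  (rhoV : 'M[C]_n -> 'M[C]_a) (rhoW : 'M[C]_n -> 'M[C]_b)
  (v : 'cV[C]_a) (w : 'cV[C]_b) : set ('cV[C]_a * 'cV[C]_b) :=
  [set (rhoV s *m v, rhoW s *m w) | s in G].

Definition elog (x : R) : \bar R := if 0 < x then (ln x)%:E else -oo%E.

Definition p_vw (n a b : nat) (HV : 'M[C]_a) (HW : 'M[C]_b)
  (rhoV : 'M[C]_n -> 'M[C]_a) (rhoW : 'M[C]_n -> 'M[C]_b)
  (v : 'cV[C]_a) (w : 'cV[C]_b) (s : 'M[C]_n) : R :=
  ln (herm_norm HW (rhoW s *m w) ^+ 2) - ln (herm_norm HV (rhoV s *m v) ^+ 2).

End Defs.

(* Main.v *)
Require Import Defs.
From HB Require Import structures.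
From mathcomp Require Import all_boot all_order all_algebra.
From mathcomp Require Import all_classical all_reals all_analysis.
From mathcomp Require Import complex.
From mathcomp Require Import ring lra.
Import Order.TTheory GRing.Theory Num.Theory.
Local Open Scope ring_scope.
Local Open Scope classical_set_scope.
Set Implicit Arguments. Unset Strict Implicit.

Section S.
Variable R : realType.
Local Notation C := R[i].
Local Open Scope complex_scope.

Lemma cconjE : @cconj R = Num.conj_op. Proof. by []. Qed.
Lemma map_mx_conjK m n (A : 'M[C]_(m,n)) : map_mx (@cconj R) (map_mx (@cconj R) A) = A.
Proof. by apply/matrixP=> i j; rewrite !mxE /cconj conjCK. Qed.

Lemma herm_ipDl d (H : 'M[C]_d) u1 u2 u' :
  herm_ip H (u1 + u2) u' = herm_ip H u1 u' + herm_ip H u2 u'.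
Proof. by rewrite /herm_ip mulmxDr mxE. Qed.
Lemma herm_ipZl d (H : 'M[C]_d) c u u' :
  herm_ip H (c *: u) u' = c * herm_ip H u u'.
Proof. by rewrite /herm_ip -scalemxAr mxE. Qed.
Lemma herm_ip0l d (H : 'M[C]_d) u' : herm_ip H 0 u' = 0.
Proof. by rewrite /herm_ip mulmx0 mxE. Qed.
Lemma map_conjM m n p (A : 'M[C]_(m,n)) (B : 'M[C]_(n,p)) :
  map_mx (@cconj R) (A *m B) = map_mx (@cconj R) A *m map_mx (@cconj R) B.
Proof.
apply/matrixP => i j; rewrite !mxE /cconj rmorph_sum; apply: eq_bigr => k _.
by rewrite !mxE rmorphM.
Qed.

Lemma herm_ipC d (H : 'M[C]_d) u u' : (map_mx (@cconj R) H)^T = H ->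
  herm_ip H u' u = cconj (herm_ip H u u').
Proof.
move=> hH; rewrite /herm_ip.
set M := (_ *m H *m u).
have -> : cconj (M 0 0) = (map_mx (@cconj R) M) 0 0 by rewrite [RHS]mxE.
rewrite /M !map_conjM.
have -> : map_mx (@cconj R) (map_mx (@cconj R) u')^T = u'^T.
  by apply/matrixP=> i j; rewrite !mxE /cconj conjCK.
have tr11 (N : 'M[C]_1) : N 0 0 = N^T 0 0 by rewrite mxE.
by rewrite [RHS]tr11 !trmx_mul trmxK hH mulmxA.
Qed.

Lemma cconjC (z : C) : cconj z = (z^*)%C. Proof. by []. Qed.

Lemma herm_ip0r d (H : 'M[C]_d) u : herm_ip H u 0 = 0.
Proof.
rewrite /herm_ip (_ : map_mx (@cconj R) 0 = 0); last first.
  by apply/matrixP=> i j; rewrite !mxE /cconj rmorph0.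
by rewrite trmx0 !mul0mx mxE.
Qed.

Lemma cN (x : C) : cconj (- x) = - cconj x. Proof. exact: rmorphN. Qed.
Lemma cM (x y : C) : cconj (x * y) = cconj x * cconj y. Proof. exact: rmorphM. Qed.
Lemma cV (x : C) : cconj (x^-1) = (cconj x)^-1. Proof. exact: fmorphV. Qed.
Lemma cR (x : R) : cconj (x%:C) = x%:C. Proof. exact: conjc_real. Qed.
Lemma rcD (x y : R) : (x + y)%:C = x%:C + y%:C.
Proof. by apply/eqP; rewrite eq_complex /= addr0 !eqxx. Qed.
Lemma rcM (x y : R) : (x * y)%:C = x%:C * y%:C.
Proof. by apply/eqP; rewrite eq_complex /= !mulr0 !mul0r subr0 addr0 !eqxx. Qed.
Lemma normcR (z : C) : `|z| = (cabs z)%:C.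
Proof. by rewrite /cabs normc_def. Qed.
Lemma cabs_ge0 (z : C) : 0 <= cabs z.
Proof. by rewrite /cabs normc_def /= sqrtr_ge0. Qed.
Lemma cabs_real (x : R) : cabs x%:C = `|x|.
Proof. by rewrite /cabs normc_def /= expr0n /= addr0 sqrtr_sqr. Qed.
Lemma cabs0 : cabs (0 : C) = 0.
Proof. by rewrite (_ : (0 : C) = 0%:C) // cabs_real normr0. Qed.
Lemma cabsD (z1 z2 : C) : cabs (z1 + z2) <= cabs z1 + cabs z2.
Proof. by have := ler_normD z1 z2; rewrite !normcR -rcD lecR. Qed.

Section Herm.
Variables (d : nat) (H : 'M[C]_d).
Hypothesis hH : hermitian_pd H.

Lemma herm_ipDr u u1 u2 :
  herm_ip H u (u1 + u2) = herm_ip H u u1 + herm_ip H u u2.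
Proof.
have hc u0 u3 := @herm_ipC d H u0 u3 hH.1.
by rewrite (hc (u1 + u2) u) herm_ipDl (hc u1 u) (hc u2 u) /cconj rmorphD.
Qed.

Lemma herm_ipZr c u u' :
  herm_ip H u (c *: u') = cconj c * herm_ip H u u'.
Proof.
have hc u0 u3 := @herm_ipC d H u0 u3 hH.1.
by rewrite (hc (c *: u') u) herm_ipZl (hc u' u) /cconj rmorphM.
Qed.

Lemma herm_ip_ge0 u : 0 <= herm_ip H u u.
Proof.
have [->|nz] := eqVneq u 0; first by rewrite herm_ip0l.
exact/ltW/hH.2.
Qed.

Lemma herm_ip_norm u : herm_ip H u u = (herm_norm H u ^+ 2)%:C.
Proof.
rewrite /herm_norm; move: (herm_ip H u u) (herm_ip_ge0 u) => [a b].
rewrite lecE /= => /andP[/eqP -> ha].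
by rewrite sqr_sqrtr.
Qed.

Lemma herm_norm_ge0 u : 0 <= herm_norm H u.
Proof. exact: sqrtr_ge0. Qed.

Lemma herm_norm_gt0 u : u != 0 -> 0 < herm_norm H u.
Proof.
move=> /hH.2; rewrite herm_ip_norm ltcR => h.
rewrite lt_def herm_norm_ge0 andbT; apply/negP => /eqP h0.
by move: h; rewrite h0 expr0n /= ltxx.
Qed.


Lemma herm_CS u u' : cabs (herm_ip H u u') <= herm_norm H u * herm_norm H u'.
Proof.
have [->|nz] := eqVneq u' 0.
  by rewrite herm_ip0r cabs0 mulr_ge0 // herm_norm_ge0.
have hc u0 u3 := @herm_ipC d H u0 u3 hH.1.
set g := herm_ip H u u'; set A := herm_norm H u; set B := herm_norm H u'.
have Bp : 0 < B by exact: herm_norm_gt0.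
have B2 : (B ^+ 2)%:C != 0.
  by rewrite (_ : (0 : C) = 0%:C) // eq_complex /= eqxx andbT sqrf_eq0 gt_eqF.
set lam := g / (B^+2)%:C.
have := herm_ip_ge0 (u + (- lam) *: u').
rewrite herm_ipDl !herm_ipDr !herm_ipZl !herm_ipZr (hc u u') -/g.
rewrite !herm_ip_norm -/A -/B.
rewrite (_ : cconj (- lam) = - cconj g / (B^+2)%:C); last first.
  by rewrite /lam cN cM cV cR mulNr.
set E := (X in 0 <= X -> _).
have -> : E = (A ^+ 2)%:C - g * cconj g / (B ^+ 2)%:C.
  have Bc : B%:C != 0.
    by rewrite (_ : (0 : C) = 0%:C) // eq_complex /= eqxx andbT gt_eqF.
  by rewrite /E /lam; field; exact: Bc.
rewrite subr_ge0 ler_pdivrMr; last by rewrite ltcR exprn_gt0.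
have e : g * cconj g = ((cabs g)^+2)%:C.
  by rewrite expr2 rcM -normcR -expr2 sqr_normc.
rewrite e -!rcM -exprMn lecR => h.
have := cabs_ge0 g; have := herm_norm_ge0 u; rewrite -/A => ha hg.
have hp : 0 <= A * B by rewrite mulr_ge0 // ltW.
set p := A * B in h hp *; move: h hp hg; generalize p (cabs g) => p0 c h hp hc0; nra.
Qed.

End Herm.

Lemma ineq2d (a b p q : R) : 0 <= a -> 0 <= b -> 0 <= p -> 0 <= q ->
  a * p + b * q <= Num.sqrt (a ^+ 2 + b ^+ 2) * Num.sqrt (p ^+ 2 + q ^+ 2).
Proof.
move=> ha hb hp hq.
rewrite -sqrtrM; last by rewrite addr_ge0 // sqr_ge0.
have h0 : 0 <= a * p + b * q by rewrite addr_ge0 // mulr_ge0.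
rewrite -[X in X <= _]ger0_norm // -sqrtr_sqr ler_sqrt; last first.
  by rewrite mulr_ge0 // addr_ge0 // sqr_ge0.
rewrite -subr_ge0 (_ : _ - _ = (a * q - b * p) ^+ 2) ?sqr_ge0 //; ring.
Qed.

Lemma acos_le (x y : R) : -1 <= x <= 1 -> -1 <= y <= 1 -> x <= y ->
  acos y <= acos x.
Proof.
move=> hx hy xy; rewrite leNgt; apply/negP => h.
have : cos (acos y) < cos (acos x).
  rewrite ltr_cos // in_itv /= ?acos_ge0 ?acos_lepi //.
by rewrite !acosK ?in_itv //= => /(le_lt_trans xy); rewrite ltxx.
Qed.

Section Sum.
Variables (a b : nat) (HV : 'M[C]_a) (HW : 'M[C]_b).
Hypotheses (hV : hermitian_pd HV) (hW : hermitian_pd HW).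

Definition cosv (x y : 'cV[C]_a * 'cV[C]_b) :=
  cabs (sum_ip HV HW x y) / (sum_norm HV HW x * sum_norm HV HW y).

Lemma fs_distE x y : fs_dist HV HW x y = acos (cosv x y).
Proof. by []. Qed.

Lemma sum_normE x : sum_norm HV HW x =
  Num.sqrt (herm_norm HV x.1 ^+ 2 + herm_norm HW x.2 ^+ 2).
Proof. by rewrite /sum_norm /sum_ip !herm_ip_norm // -rcD. Qed.

Lemma sum_norm_ge0 x : 0 <= sum_norm HV HW x.
Proof. exact: sqrtr_ge0. Qed.

Lemma sum_cabs x y : cabs (sum_ip HV HW x y) <=
  herm_norm HV x.1 * herm_norm HV y.1 + herm_norm HW x.2 * herm_norm HW y.2.
Proof.
apply: le_trans (cabsD _ _) _.
by apply: lerD; apply: herm_CS.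
Qed.

Lemma cosv_bound x y : cosv x y <=
  (herm_norm HV x.1 * herm_norm HV y.1 + herm_norm HW x.2 * herm_norm HW y.2) /
  (sum_norm HV HW x * sum_norm HV HW y).
Proof.
rewrite /cosv ler_wpM2r // ?invr_ge0 ?mulr_ge0 ?sum_norm_ge0 //.
exact: sum_cabs.
Qed.

Lemma cosv_ge0 x y : 0 <= cosv x y.
Proof. by rewrite /cosv mulr_ge0 ?invr_ge0 ?mulr_ge0 ?sum_norm_ge0 ?cabs_ge0. Qed.

Lemma cosv_le1 x y : cosv x y <= 1.
Proof.
have hd := mulr_ge0 (sum_norm_ge0 x) (sum_norm_ge0 y).
have [d0|dp] := eqVneq (sum_norm HV HW x * sum_norm HV HW y) 0.
  by rewrite /cosv d0 invr0 mulr0 ler01.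
have dpos : 0 < sum_norm HV HW x * sum_norm HV HW y by rewrite lt_def dp hd.
rewrite /cosv ler_pdivrMr // mul1r.
apply: le_trans (sum_cabs x y) _.
rewrite !sum_normE; apply: ineq2d; exact: herm_norm_ge0.
Qed.

Lemma cosv_itv x y : -1 <= cosv x y <= 1.
Proof. by rewrite cosv_le1 andbT (le_trans _ (cosv_ge0 x y)) // lerN10. Qed.

Lemma herm_norm0 d (H : 'M[C]_d) : herm_norm H 0 = 0.
Proof. by rewrite /herm_norm herm_ip0l /= sqrtr0. Qed.

Lemma sum_ip_self x : sum_ip HV HW x x = (sum_norm HV HW x ^+ 2)%:C.
Proof.
by rewrite sum_normE sqr_sqrtr ?addr_ge0 ?sqr_ge0 // /sum_ip !herm_ip_norm // -rcD.
Qed.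

Lemma sum_norm_gt0 x : nonzero_vec x -> 0 < sum_norm HV HW x.
Proof.
move=> nz; rewrite sum_normE sqrtr_gt0.
case: nz => h.
  have hp := herm_norm_gt0 hV h; have := sqr_ge0 (herm_norm HW x.2); nra.
have hp := herm_norm_gt0 hW h; have := sqr_ge0 (herm_norm HV x.1); nra.
Qed.

Lemma fs_dist_self x : nonzero_vec x -> fs_dist HV HW x x = 0.
Proof.
move=> nz; have hp := sum_norm_gt0 nz.
rewrite fs_distE /cosv sum_ip_self cabs_real ger0_norm ?sqr_ge0 //.
by rewrite expr2 divff ?acos1 // mulf_neq0 // gt_eqF.
Qed.

Lemma sub_closure (T : set ('cV[C]_a * 'cV[C]_b)) x :
  (forall z, T z -> nonzero_vec z) -> T x -> fs_closure HV HW T x.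
Proof.
move=> hT Tx; split; first exact: hT.
by move=> eps ep; exists x => //; rewrite fs_dist_self; [exact: ep | exact: hT].
Qed.

End Sum.

Lemma J_sq n m (e : m + m = n) :
  castmx (e, e) (symp_form R m) *m castmx (e, e) (symp_form R m) = - 1%:M.
Proof.
case: n / e; rewrite castmx_id /symp_form mulmx_block.
rewrite !mulmx0 !mul0mx !mulmx1 !mul1mx !add0r !addr0.
by rewrite (scalar_mx_block m m (1 : C)) opp_block_mx oppr0.
Qed.

Lemma classical_props n (G : set 'M[C]_n) : classical_group G ->
  G 1%:M /\ forall s, G s -> exists2 s', G s' & s' *m s = 1%:M.
Proof.
case => [|||| m e] /=.
- split; first exact: unitmx1.
  move=> s hs; exists (invmx s); first by rewrite /= unitmx_inv.
  by rewrite mulVmx.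
- split; first by rewrite /= det1.
  move=> s /= hs; have su : s \in unitmx by rewrite unitmxE hs unitr1.
  exists (invmx s); last by rewrite mulVmx.
  by rewrite /= det_inv hs invr1.
- split; first by rewrite /= trmx1 mulmx1.
  move=> s /= hs; exists s^T => //=.
  by rewrite trmxK; apply: mulmx1C.
- split; first by rewrite /= trmx1 mulmx1 det1.
  move=> s /= [hs hd]; exists s^T => //=.
  by rewrite trmxK det_tr hd; split => //; apply: mulmx1C.
- split; first by rewrite /= trmx1 mul1mx mulmx1.
  move=> s /= hs.
  have JJ := J_sq e.
  set J := castmx (e, e) (symp_form R m) in hs JJ *.
  have su : s \in unitmx.
    have h1 : (- (J *m s^T *m J)) *m s = 1%:M.
      by rewrite mulNmx -!mulmxA (mulmxA s^T) hs JJ opprK.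
    by have [] := mulmx1_unit h1.
  exists (invmx s); last by rewrite mulVmx.
  have : (invmx s)^T *m (s^T *m J *m s) *m invmx s = J.
    by rewrite !mulmxA -trmx_mul mulmxV // trmx1 mul1mx -mulmxA mulmxV // mulmx1.
  by rewrite hs.
Qed.

Lemma sq_le (x y : R) : 0 <= x -> x <= y -> x ^+ 2 <= y ^+ 2.
Proof. by move=> hx hxy; rewrite !expr2 ler_pM. Qed.

Lemma sq_le_inv (x y : R) : 0 <= y -> x ^+ 2 <= y ^+ 2 -> x <= y.
Proof.
move=> hy h; rewrite leNgt; apply/negP => hxy.
have : y ^+ 2 < x ^+ 2 by rewrite !expr2 ltr_pM.
by rewrite ltNge h.
Qed.

Lemma cone_ineq (a0 b0 p q s0 : R) : 0 < s0 -> 0 <= a0 -> 0 <= b0 ->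
  b0 < s0 * a0 -> 0 < p -> 0 <= q -> s0 * p <= q ->
  ((a0 * p + b0 * q) / (Num.sqrt (a0 ^+ 2 + b0 ^+ 2) * Num.sqrt (p ^+ 2 + q ^+ 2))) ^+ 2
  <= 1 - (s0 * a0 - b0) ^+ 2 / ((1 + s0 ^+ 2) * (a0 ^+ 2 + b0 ^+ 2)).
Proof.
move=> s0p a0p b0p ba pp qp sq.
have a0pos : 0 < a0.
  rewrite lt_def a0p andbT; apply/negP => /eqP a00.
  by move: ba; rewrite a00 mulr0 => /(le_lt_trans b0p); rewrite ltxx.
have Xp : 0 < a0 ^+ 2 + b0 ^+ 2 by rewrite ltr_pwDl ?sqr_ge0 ?exprn_gt0.
have Yp : 0 < p ^+ 2 + q ^+ 2 by have := sqr_ge0 q; have := exprn_gt0 2 pp; lra.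
rewrite expr_div_n exprMn (sqr_sqrtr (ltW Xp)) (sqr_sqrtr (ltW Yp)).
set X := a0 ^+ 2 + b0 ^+ 2 in Xp *; set Y := p ^+ 2 + q ^+ 2 in Yp *.
set L := a0 * p + b0 * q; set D := s0 * a0 - b0.
set K := a0 * q - b0 * p.
have h1 : D * q <= s0 * K.
  rewrite /D /K -subr_ge0 (_ : _ - _ = b0 * (q - s0 * p)); last by ring.
  by rewrite mulr_ge0 // subr_ge0.
have h2 : 0 <= D * q by rewrite mulr_ge0 // /D subr_ge0 ltW.
have h3 : (D * q) ^+ 2 <= s0 ^+ 2 * K ^+ 2.
  by rewrite -exprMn; apply: sq_le.
have h4 : s0 ^+ 2 * Y <= (1 + s0 ^+ 2) * q ^+ 2.
  rewrite /Y; have h0 : 0 <= s0 * p by rewrite mulr_ge0 // ltW.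
  have : (s0 * p) ^+ 2 <= q ^+ 2.
    exact: sq_le.
  rewrite exprMn; nra.
have h5 : D ^+ 2 * Y <= (1 + s0 ^+ 2) * K ^+ 2.
  have s2 : 0 < s0 ^+ 2 by rewrite exprn_gt0.
  rewrite -(ler_pM2l s2).
  apply: (le_trans (y := D ^+ 2 * ((1 + s0 ^+ 2) * q ^+ 2))).
    by rewrite mulrCA ler_wpM2l // sqr_ge0.
  rewrite [X in X <= _]mulrCA [X in _ <= X]mulrCA ler_wpM2l ?addr_ge0 ?sqr_ge0 ?ler01 //.
  by rewrite -exprMn.
have h6 : K ^+ 2 = X * Y - L ^+ 2 by rewrite /K /X /Y /L; ring.
have XYp : 0 < X * Y by rewrite mulr_gt0.
have s1 : 0 < 1 + s0 ^+ 2 by rewrite ltr_pwDl ?ltr01 ?sqr_ge0.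
rewrite ler_pdivrMr //.
have -> : (1 - D ^+ 2 / ((1 + s0 ^+ 2) * X)) * (X * Y) =
          X * Y - D ^+ 2 * Y / (1 + s0 ^+ 2).
  by field; rewrite ?gt_eqF.
rewrite lerBrDr -lerBrDl -h6 ler_pdivrMr // mulrC.
by rewrite mulrC [X in _ <= X]mulrC.
Qed.

Section Main.
Variables (N a b : nat) (G : set 'M[C]_N.+1).
Variables (rhoV : 'M[C]_N.+1 -> 'M[C]_a) (rhoW : 'M[C]_N.+1 -> 'M[C]_b).
Variables (HV : 'M[C]_a) (HW : 'M[C]_b) (v : 'cV[C]_a) (w : 'cV[C]_b).
Hypotheses (hG : classical_group G) (hrV : rational_rep G rhoV) (hrW : rational_rep G rhoW).
Hypotheses (hV : hermitian_pd HV) (hW : hermitian_pd HW) (vnz : v != 0) (wnz : w != 0).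

Lemma G1 : G 1%:M. Proof. exact: (classical_props hG).1. Qed.

Lemma rep_nz d (rho : 'M[C]_N.+1 -> 'M[C]_d) (x : 'cV[C]_d) :
  rational_rep G rho -> x != 0 -> forall s, G s -> rho s *m x != 0.
Proof.
move=> [r1 rM _] xnz s Gs.
have [s' Gs' e] := (classical_props hG).2 s Gs.
apply: contraNneq xnz => h.
by rewrite -[x]mul1mx -r1 -e rM // -mulmxA h mulmx0.
Qed.

Definition P s := herm_norm HV (rhoV s *m v).
Definition Q s := herm_norm HW (rhoW s *m w).
Definition r s := Q s ^+ 2 / P s ^+ 2.

Lemma P_gt0 s : G s -> 0 < P s.
Proof. by move=> Gs; apply: herm_norm_gt0 => //; apply: rep_nz. Qed.
Lemma Q_gt0 s : G s -> 0 < Q s.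
Proof. by move=> Gs; apply: herm_norm_gt0 => //; apply: rep_nz. Qed.
Lemma r_ge0 s : 0 <= r s.
Proof. by rewrite /r divr_ge0 ?sqr_ge0. Qed.

Definition Rset := [set r s | s in G].
Definition m := inf Rset.

Lemma Rset_nz : Rset !=set0.
Proof. by exists (r 1%:M), 1%:M => //; exact: G1. Qed.
Lemma Rset_lb : has_lbound Rset.
Proof. by exists 0 => _ [s _ <-]; exact: r_ge0. Qed.
Lemma m_le s : G s -> m <= r s.
Proof. by move=> Gs; apply: (ge_inf Rset_lb); exists s. Qed.
Lemma m_ge0 : 0 <= m.
Proof. by rewrite /m; apply: (lb_le_inf Rset_nz) => _ [s _ <-]; exact: r_ge0. Qed.
Lemma m_approx t : m < t -> exists2 s, G s & r s < t.
Proof.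
move=> mt; have [//|h] := pselect (exists2 s, G s & r s < t).
exfalso; have : t <= m.
  rewrite /m; apply: (lb_le_inf Rset_nz) => _ [s Gs <-].
  rewrite leNgt; apply/negP => h'; apply: h; by exists s.
by rewrite leNgt mt.
Qed.

Definition A := orbit_pt G rhoV rhoW v w.
Definition B := orbit_pt G rhoV rhoW v 0.

Lemma A_nz z : A z -> nonzero_vec z.
Proof. by move=> [s Gs <-]; left; apply: rep_nz. Qed.
Lemma B_nz z : B z -> nonzero_vec z.
Proof. by move=> [s Gs <-]; left; apply: rep_nz. Qed.


Lemma norm_rW0 s : herm_norm HW (rhoW s *m 0) = 0.
Proof. by rewrite mulmx0 herm_norm0. Qed.

Lemma clB_snd x : fs_closure HV HW B x -> x.2 = 0.
Proof.
move=> [nzx hx]; apply/eqP; apply: contraT => x2nz.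
set a0 := herm_norm HV x.1; set b0 := herm_norm HW x.2.
have b0p : 0 < b0 := herm_norm_gt0 hW x2nz.
have a0p : 0 <= a0 := herm_norm_ge0 _ _.
set S := Num.sqrt (a0 ^+ 2 + b0 ^+ 2).
have SS : 0 < a0 ^+ 2 + b0 ^+ 2.
  by have := sqr_ge0 a0; have := exprn_gt0 2 b0p; lra.
have Sp : 0 < S by rewrite sqrtr_gt0.
set k := a0 / S.
have k0 : 0 <= k by rewrite divr_ge0 // ltW.
have k1 : k < 1.
  rewrite ltr_pdivrMr // mul1r /S -[X in X < _]ger0_norm // -sqrtr_sqr ltr_sqrt //.
  by have := exprn_gt0 2 b0p; lra.
have kI : -1 <= k < 1 by rewrite k1 andbT; lra.
have [y [s Gs <-] hy] := hx (acos k) (acos_gt0 kI).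
have : acos k <= fs_dist HV HW x (rhoV s *m v, rhoW s *m 0).
  rewrite fs_distE; apply: acos_le.
  - exact: (cosv_itv hV hW).
  - by rewrite (ltW k1) andbT; lra.
  apply: le_trans (cosv_bound hV hW _ _) _.
  rewrite /= norm_rW0 mulr0 addr0 !sum_normE //= norm_rW0 expr0n /= addr0.
  rewrite sqrtr_sqr ger0_norm ?herm_norm_ge0 // -/a0 -/b0 -/S.
  have pp : 0 < herm_norm HV (rhoV s *m v).
    by apply: herm_norm_gt0 => //; apply: rep_nz.
  rewrite /k le_eqVlt; apply/orP; left; apply/eqP; field.
  by rewrite !gt_eqF.
by rewrite leNgt hy.
Qed.

Lemma clA_cone x : fs_closure HV HW A x ->
  m * herm_norm HV x.1 ^+ 2 <= herm_norm HW x.2 ^+ 2.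
Proof.
move=> [nzx hx]; rewrite leNgt; apply/negP => hlt.
set a0 := herm_norm HV x.1 in hlt *; set b0 := herm_norm HW x.2 in hlt *.
have a0p : 0 <= a0 := herm_norm_ge0 _ _.
have b0p : 0 <= b0 := herm_norm_ge0 _ _.
have mp : 0 < m.
  rewrite lt_def m_ge0 andbT; apply/negP => /eqP m0.
  by move: hlt; rewrite m0 mul0r ltNge sqr_ge0.
set s0 := Num.sqrt m.
have s0p : 0 < s0 by rewrite sqrtr_gt0.
have ms : m = s0 ^+ 2 by rewrite sqr_sqrtr // ltW.
have bs : b0 < s0 * a0.
  rewrite ms -exprMn in hlt; rewrite ltNge; apply/negP => h.
  have := sq_le (mulr_ge0 (ltW s0p) a0p) h; rewrite leNgt hlt //.
set D := s0 * a0 - b0.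
have Dp : 0 < D by rewrite /D subr_gt0.
have a0pos : 0 < a0.
  rewrite lt_def a0p andbT; apply/negP => /eqP a00.
  by move: bs; rewrite a00 mulr0 => /(le_lt_trans b0p); rewrite ltxx.
have Xp : 0 < a0 ^+ 2 + b0 ^+ 2.
  by have := sqr_ge0 b0; have := exprn_gt0 2 a0pos; lra.
have s1 : 0 < 1 + s0 ^+ 2 by have := sqr_ge0 s0; lra.
set kap := D ^+ 2 / ((1 + s0 ^+ 2) * (a0 ^+ 2 + b0 ^+ 2)).
have kapp : 0 < kap by rewrite /kap divr_gt0 ?exprn_gt0 // mulr_gt0.
set k := Num.sqrt (1 - kap).
have k0 : 0 <= k := sqrtr_ge0 _.
have k1 : k < 1.
  have h1 : Num.sqrt (1 - kap) < Num.sqrt 1 by rewrite ltr_sqrt ?ltr01 //; lra.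
  by rewrite sqrtr1 in h1.
have kI : -1 <= k < 1 by rewrite k1 andbT; lra.
have [y [s Gs <-] hy] := hx (acos k) (acos_gt0 kI).
have : acos k <= fs_dist HV HW x (rhoV s *m v, rhoW s *m w).
  rewrite fs_distE; apply: acos_le.
  - exact: (cosv_itv hV hW).
  - by rewrite (ltW k1) andbT; lra.
  apply: le_trans (cosv_bound hV hW _ _) _.
  rewrite !sum_normE //= -/a0 -/b0.
  have pp := P_gt0 Gs; have qp := Q_gt0 Gs.
  rewrite -/(P s) -/(Q s).
  have sq : s0 * P s <= Q s.
    have := m_le Gs; rewrite /r ler_pdivlMr ?exprn_gt0 // ms -exprMn.
    by apply: sq_le_inv; rewrite ltW.
  have c0 : 0 <= (a0 * P s + b0 * Q s) /
      (Num.sqrt (a0 ^+ 2 + b0 ^+ 2) * Num.sqrt (P s ^+ 2 + Q s ^+ 2)).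
    by rewrite divr_ge0 ?mulr_ge0 ?sqrtr_ge0 // addr_ge0 // mulr_ge0 // ltW.
  have ci := cone_ineq s0p a0p b0p bs pp (ltW qp) sq.
  rewrite -[X in X <= _]ger0_norm // -sqrtr_sqr /k ler_sqrt //.
  exact: le_trans (sqr_ge0 _) ci.
by rewrite leNgt hy.
Qed.


Lemma atan_sqrt_itv (t : R) : 0 <= atan (Num.sqrt t) /\ atan (Num.sqrt t) <= pi.
Proof.
split; first by have := le_atan (sqrtr_ge0 t); rewrite atan0.
apply: le_trans (ltW (atan_ltpi2 _)) _.
by have := pi_gt0 R; lra.
Qed.

Lemma lower x y : fs_closure HV HW A x -> fs_closure HV HW B y ->
  atan (Num.sqrt m) <= fs_dist HV HW x y.
Proof.
move=> cx cy; have y2 := clB_snd cy; have cone := clA_cone cx.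
have Sp := sum_norm_gt0 hV hW cx.1.
have [at0 atpi] := atan_sqrt_itv m.
set K0 := (Num.sqrt (1 + m))^-1.
have m0 := m_ge0.
have s1 : 1 <= Num.sqrt (1 + m).
  have h1 : Num.sqrt 1 <= Num.sqrt (1 + m) by rewrite ler_sqrt; lra.
  by rewrite sqrtr1 in h1.
have s1p : 0 < Num.sqrt (1 + m) by lra.
have eK : cos (atan (Num.sqrt m)) = K0 by rewrite cos_atan sqr_sqrtr.
rewrite -(@cosK _ (atan (Num.sqrt m))) ?in_itv /= ?at0 // eK fs_distE.
apply: acos_le.
- exact: (cosv_itv hV hW).
- have : 0 <= K0 by rewrite invr_ge0 ltW.
  have : K0 <= 1 by rewrite invf_le1.
  lra.
apply: le_trans (cosv_bound hV hW _ _) _.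
rewrite y2 herm_norm0 mulr0 addr0 [sum_norm _ _ y]sum_normE // y2 herm_norm0.
rewrite expr0n /= addr0 sqrtr_sqr ger0_norm ?herm_norm_ge0 //.
set p := herm_norm HV y.1.
have [p0|pnz] := eqVneq p 0.
  by rewrite p0 mulr0 mul0r invr_ge0 ltW.
rewrite (_ : herm_norm HV x.1 * p / (sum_norm HV HW x * p) =
             herm_norm HV x.1 / sum_norm HV HW x); last first.
  by field; rewrite pnz gt_eqF.
rewrite ler_pdivrMr // /K0 mulrC ler_pdivlMr // sum_normE //.
set a0 := herm_norm HV x.1 in cone *; set b0 := herm_norm HW x.2 in cone *.
have a0p : 0 <= a0 := herm_norm_ge0 _ _.
rewrite -[a0 in X in X <= _]ger0_norm // -sqrtr_sqr -sqrtrM ?sqr_ge0 //.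
rewrite ler_sqrt; last by rewrite addr_ge0 ?sqr_ge0.
lra.
Qed.

Lemma upper s : G s ->
  image2 (fs_closure HV HW A) (fs_closure HV HW B) (fun x y => fs_dist HV HW x y)
    (atan (Num.sqrt (r s))).
Proof.
move=> Gs.
exists (rhoV s *m v, rhoW s *m w); first by apply: (sub_closure hV hW A_nz); exists s.
exists (rhoV s *m v, rhoW s *m 0); first by apply: (sub_closure hV hW B_nz); exists s.
have pp := P_gt0 Gs; have qp := Q_gt0 Gs.
have [at0 atpi] := atan_sqrt_itv (r s).
rewrite -(@cosK _ (atan (Num.sqrt (r s)))) ?in_itv /= ?at0 // cos_atan sqr_sqrtr ?r_ge0 //.
rewrite fs_distE /cosv /sum_ip /= mulmx0 herm_ip0r addr0 herm_ip_norm //.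
rewrite cabs_real ger0_norm ?sqr_ge0 // !sum_normE //= herm_norm0.
rewrite expr0n /= addr0 sqrtr_sqr ger0_norm ?herm_norm_ge0 // -/(P s) -/(Q s).
congr acos.
rewrite /r (_ : 1 + Q s ^+ 2 / P s ^+ 2 = (P s ^+ 2 + Q s ^+ 2) * (P s)^-1 ^+ 2); last first.
  by field; rewrite gt_eqF.
have XP : 0 < P s ^+ 2 + Q s ^+ 2.
  by have := exprn_gt0 2 pp; have := sqr_ge0 (Q s); lra.
rewrite sqrtrM ?ltW // sqrtr_sqr ger0_norm ?invr_ge0 ?ltW //.
have : 0 < Num.sqrt (P s ^+ 2 + Q s ^+ 2) by rewrite sqrtr_gt0.
move=> h; field; by rewrite !gt_eqF.
Qed.


Definition Sd := image2 (fs_closure HV HW A) (fs_closure HV HW B)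
  (fun x y => fs_dist HV HW x y).
Definition D := fs_set_dist HV HW (fs_closure HV HW A) (fs_closure HV HW B).

Lemma Sd_nz : Sd !=set0.
Proof. by exists (atan (Num.sqrt (r 1%:M))); apply: upper; exact: G1. Qed.

Lemma Sd_lb : has_lbound Sd.
Proof. by exists (atan (Num.sqrt m)) => _ [x cx [y cy <-]]; apply: lower. Qed.

Lemma D_ge : atan (Num.sqrt m) <= D.
Proof.
by apply: (lb_le_inf Sd_nz) => _ [x cx [y cy <-]]; apply: lower.
Qed.

Lemma D_le s : G s -> D <= atan (Num.sqrt (r s)).
Proof. by move=> Gs; apply: (ge_inf Sd_lb); apply: upper. Qed.

Lemma tan_le (x y : R) : - (pi / 2) < x -> y < pi / 2 -> x <= y -> tan x <= tan y.
Proof.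
move=> hx hy; rewrite le_eqVlt => /orP[/eqP ->//|h]; apply: ltW.
by rewrite ltr_tan // in_itv /= ?hx ?hy ?(lt_trans hx h) ?(lt_trans h hy).
Qed.

Lemma tanD2 : tan D ^+ 2 = m.
Proof.
have pi0 := pi_gt0 R.
have hD1 := D_ge; have hD2 := D_le G1.
have [at0 _] := atan_sqrt_itv m.
have p2 : - (pi / 2) < 0 :> R by rewrite ltrNl oppr0 divr_gt0.
have hlo : - (pi / 2) < D by apply: lt_le_trans p2 (le_trans at0 hD1).
have hhi : D < pi / 2 by apply: le_lt_trans hD2 (atan_ltpi2 _).
have t1 : tan (atan (Num.sqrt m)) <= tan D := tan_le (atan_gtNpi2 _) hhi hD1.
rewrite atanK in t1.
have t0 : 0 <= tan D by apply: le_trans (sqrtr_ge0 _) t1.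
apply/le_anti/andP; split.
  apply: (lb_le_inf Rset_nz) => _ [s Gs <-].
  have t2 : tan D <= tan (atan (Num.sqrt (r s))) :=
    tan_le hlo (atan_ltpi2 _) (D_le Gs).
  rewrite atanK in t2.
  by rewrite -(sqr_sqrtr (r_ge0 s)); apply: sq_le.
by rewrite -{1}(sqr_sqrtr m_ge0); apply: sq_le => //; apply: sqrtr_ge0.
Qed.


Lemma r_gt0 s : G s -> 0 < r s.
Proof. by move=> Gs; rewrite /r divr_gt0 ?exprn_gt0 ?P_gt0 ?Q_gt0. Qed.

Lemma pE s : G s -> p_vw HV HW rhoV rhoW v w s = ln (r s).
Proof.
move=> Gs; have pp := P_gt0 Gs; have qp := Q_gt0 Gs.
rewrite /p_vw -/(P s) -/(Q s) /r lnM ?posrE ?invr_gt0 ?exprn_gt0 //.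
by rewrite lnV ?posrE ?exprn_gt0.
Qed.

Lemma approx t : m < expR t -> exists2 s, G s & ln (r s) < t.
Proof.
move=> mt; have [s Gs h] := m_approx mt; exists s => //.
by rewrite -[X in _ < X](expRK t) ltr_ln ?posrE ?r_gt0 ?expR_gt0.
Qed.

Lemma main_eq : ereal_inf [set (p_vw HV HW rhoV rhoW v w s)%:E | s in G] =
  elog (tan D ^+ 2).
Proof.
rewrite tanD2 /elog.
set E := [set _ | s in G].
have memE s : G s -> E (ln (r s))%:E by move=> Gs; exists s => //; rewrite pE.
case: ifPn => mpos.
- apply/le_anti/andP; split.
  + apply/lee_addgt0Pr => e ep.
    have [s Gs hs] : exists2 s, G s & ln (r s) < ln m + e.
      apply: approx; rewrite expRD lnK ?posrE //.
      by rewrite ltr_pMr // expR_gt1.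
    apply: le_trans (ereal_inf_lbound (memE s Gs)) _.
    by rewrite -EFinD lee_fin ltW.
  + apply: le_ereal_inf_tmp => _ [s Gs <-].
    by rewrite pE // lee_fin ler_ln ?posrE ?r_gt0 // m_le.
- have m0 : m = 0 by apply/eqP; rewrite eq_le m_ge0 andbT leNgt.
  suff H : forall t : R, (ereal_inf E <= t%:E)%E.
    move: H; case: (ereal_inf E) => [r0 | | ] H //.
      have := H (r0 - 1); rewrite lee_fin => h; exfalso; lra.
    by have := H 0.
  move=> t; have [s Gs hs] : exists2 s, G s & ln (r s) < t by apply: approx; rewrite m0 expR_gt0.
  apply: le_trans (ereal_inf_lbound (memE s Gs)) _.
  by rewrite lee_fin ltW.
Qed.

End Main.
End S.

Unset Implicit Arguments.

Theorem corollary4p4 (R : realType) (N a b : nat) (G : set 'M[R[i]]_N.+1)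
  (rhoV : 'M[R[i]]_N.+1 -> 'M[R[i]]_a) (rhoW : 'M[R[i]]_N.+1 -> 'M[R[i]]_b)
  (HV : 'M[R[i]]_a) (HW : 'M[R[i]]_b) (v : 'cV[R[i]]_a) (w : 'cV[R[i]]_b) :
  classical_group G ->
  rational_rep G rhoV -> rational_rep G rhoW ->
  hermitian_pd HV -> hermitian_pd HW ->
  v != 0 -> w != 0 ->
  ereal_inf [set (p_vw HV HW rhoV rhoW v w s)%:E | s in G] =
  elog (tan (fs_set_dist HV HW
               (fs_closure HV HW (orbit_pt G rhoV rhoW v w))
               (fs_closure HV HW (orbit_pt G rhoV rhoW v 0))) ^+ 2).
Proof.
move=> hG hrV hrW hV hW vnz wnz.
exact: (main_eq hG hrV hrW hV hW vnz wnz).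
Qed.
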